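(* Let $(\lambda,\mu,\mu')$ be an admissible triplet and let $\mu^*,\mu'^*$ be the associated weights. Then $\langle\lambda+\mu'^*,\alpha_j^\vee\rangle\ge0$ for every $j\in\{1,\dots,n-1\}$, i.e. $\lambda_j-\lambda_{j+1}+\mu'^*_j-\mu'^*_{j+1}\ge0$.
   Context: Type $D_n$ weights are $(\lambda_1,\dots,\lambda_n)$; $\langle\lambda,\alpha_j^\vee\rangle=\lambda_j-\lambda_{j+1}$ for $j<n$ and $\langle\lambda,\alpha_n^\vee\rangle=\lambda_{n-1}+\lambda_n$; $P_+=\{\lambda_j\in\frac12\mathbb Z,\lambda_j-\lambda_k\in\mathbb Z,\lambda_1\ge\dots\ge\lambda_n,\lambda_{n-1}+\lambda_n\ge0\}$; $P[S]=\{(\pm\frac12,\dots,\pm\frac12)\}$. For $k\ge0$, $\Delta^k$ is the set of sums $\mu_1+\dots+\mu_k$ over tuples $(\mu_1,\dots,\mu_k)\in P[S]^k$ all of whose partial sums lie in $P_+$ ($\Delta^0=\{0\}$). A triplet $(\lambda,\mu,\mu')$ is admissible if $\lambda\in\Delta^k$ for some $k\ge0$, $\mu,\mu'\in P[S]$, and $\lambda+\mu,\ \lambda+\mu+\mu'\in P_+$. A free interval of the triplet is a subset $\mathrm{Fr}\subset\{1,\dots,n\}$, maximal with respect to inclusion, such that $\lambda_j$ is constant on $\mathrm{Fr}$ and $\mu_j\mu'_j<0$ for all $j\in\mathrm{Fr}$. The weights $\mu^*,\mu'^*\in P[S]$ are defined as follows: outside all free intervals they agree with $\mu,\mu'$;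 on each free interval $\mathrm{Fr}$, with $b=|\{j\in\mathrm{Fr}:\mu'_j=+\frac12\}|$, $\mu'^*_j=+\frac12$ for the $b$ smallest elements $j$ of $\mathrm{Fr}$ and $\mu'^*_j=-\frac12$ for the remaining elements of $\mathrm{Fr}$, and $\mu^*_j=-\mu'^*_j$ for $j\in\mathrm{Fr}$. (Equivalently, $b_{\mu'^*}$, $b_{\mu^*}$ are obtained from $b_{\mu'}$, $b_\mu$ in the spinor crystal by moving, within each free interval, the $+$'s of $\mu'$ (resp. the $-$'s of $\mu$) leftward across the other signs by crystal operators.) *)

(* Defs.v *)
(* Type D_n weights are encoded as {ffun 'I_n -> rat};
   coordinate lambda_j (1 <= j <= n) of the paper is  l (j-1)  here. *)
From HB Require Import structures.
From mathcomp Require Import all_boot all_order all_algebra.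
Set Implicit Arguments. Unset Strict Implicit. Unset Printing Implicit Defensive.
Import Order.TTheory GRing.Theory Num.Theory.
Local Open Scope ring_scope.

Definition weight (n : nat) := {ffun 'I_n -> rat}.

Definition dominant (n : nat) (l : weight n) : bool :=
  [&& [forall j, (2 * l j) \is a Num.int],
      [forall j, forall k, (l j - l k) \is a Num.int],
      [forall j : 'I_n, forall k : 'I_n, (j <= k)%N ==> (l k <= l j)] &
      [forall j : 'I_n, forall k : 'I_n,
          ((j.+2 == n) && (k.+1 == n)) ==> (0 <= l j + l k)]].

Definition spin_weight (n : nat) (m : weight n) : bool :=
  [forall j, (m j == 1/2) || (m j == -(1/2))].

Definition in_Delta (n k : nat) (l : weight n) : Prop :=
  exists s : seq (weight n),
    [/\ size s = k, all (@spin_weight n) s,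
        (forall i, (1 <= i <= k)%N -> dominant (\sum_(m <- take i s) m))
      & l = \sum_(m <- s) m].

Definition admissible (n : nat) (l mu mu' : weight n) : Prop :=
  [/\ exists k, in_Delta k l, spin_weight mu, spin_weight mu',
      dominant (l + mu) & dominant (l + mu + mu')].

Definition free_prop (n : nat) (l mu mu' : weight n) (F : {set 'I_n}) : bool :=
  [forall j in F, forall k in F, l j == l k] &&
  [forall j in F, mu j * mu' j < 0].

Definition free_interval (n : nat) (l mu mu' : weight n) (F : {set 'I_n}) : bool :=
  maxset (free_prop l mu mu') F.

(* mu'^* : on a free interval F with b entries of mu' equal to +1/2, the b
   smallest elements of F get +1/2, the others -1/2; unchanged elsewhere. *)
Definition mu'star (n : nat) (l mu mu' : weight n) : weight n :=
  [ffun j => match [pick F | free_interval l mu mu' F && (j \in F)] with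
   | Some F =>
       if (#|[set k in F | (k < j)%N]| < #|[set k in F | mu' k == 1/2]|)%N
       then 1/2 else -(1/2)
   | None => mu' j
   end].

Definition mustar (n : nat) (l mu mu' : weight n) : weight n :=
  [ffun j => if [exists F, free_interval l mu mu' F && (j \in F)]
             then - mu'star l mu mu' j else mu j].

(* Main.v *)
Require Import Defs.
From HB Require Import structures.
From mathcomp Require Import all_boot all_order all_algebra.
From mathcomp Require Import lra zify.
Import Order.TTheory GRing.Theory Num.Theory.
Local Open Scope ring_scope.
Set Implicit Arguments.

Lemma Delta_dom n k (l : weight n) : in_Delta k l -> dominant l.
Proof.
case=> s [sz _ hd ->].
case: k sz hd => [|k] sz hd.
  have -> : s = [::] by apply/nilP; rewrite /nilp sz.
  rewrite big_nil.
  apply/and4P; split; apply/forallP => j; rewrite ?ffunE //; try (apply/forallP => i; rewrite ?ffunE //).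
  - by rewrite lexx implybT.
  - by rewrite addr0 lexx implybT.
have := hd k.+1; rewrite -sz take_size; apply; rewrite sz; lia.
Qed.

Lemma spinE n (m : weight n) j : spin_weight m -> m j = 1/2 \/ m j = -(1/2).
Proof. by move/forallP/(_ j)/orP => [] /eqP; auto. Qed.

Lemma dom_le n (l : weight n) (j k : 'I_n) : dominant l -> (j <= k)%N -> l k <= l j.
Proof. by case/and4P => _ _ /forallP /(_ j) /forallP /(_ k) /implyP H _ /H. Qed.

Lemma dom_int n (l : weight n) (j k : 'I_n) : dominant l -> (l j - l k) \is a Num.int.
Proof. by case/and4P => _ /forallP /(_ j) /forallP /(_ k). Qed.

Section Free.
Variables (n : nat) (l mu mu' : weight n).

Lemma free_mem F j : free_interval l mu mu' F -> j \in F -> mu j * mu' j < 0.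
Proof. by move=> /maxsetp /andP [_ /forallP /(_ j) /implyP H] /H. Qed.

Lemma free_l F j k : free_interval l mu mu' F -> j \in F -> k \in F -> l j = l k.
Proof.
by move=> /maxsetp /andP [/forallP /(_ j) /implyP H _] /H /forallP /(_ k) /implyP H2 /H2 /eqP.
Qed.

Lemma none_nonneg j : (forall F, ~~ (free_interval l mu mu' F && (j \in F))) ->
  0 <= mu j * mu' j.
Proof.
move=> hN; rewrite leNgt; apply/negP => hneg.
have hp : free_prop l mu mu' [set j].
  apply/andP; split; apply/forallP => x; apply/implyP; rewrite inE => /eqP ->.
    by apply/forallP => y; apply/implyP; rewrite inE => /eqP ->.
  done.
case: (maxset_exists hp) => F hF sub.
have := hN F; rewrite /free_interval hF /=; move: sub; rewrite sub1set => ->; done.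
Qed.

Lemma free_same F F' j k : free_interval l mu mu' F -> free_interval l mu mu' F' ->
  j \in F -> k \in F' -> l j = l k -> F = F'.
Proof.
move=> hF hF' jF kF' ljk.
have hl : forall x, x \in F :|: F' -> l x = l j.
  move=> x; rewrite inE => /orP [xF|xF'].
    by rewrite (free_l hF xF jF).
  by rewrite (free_l hF' xF' kF').
have hp : free_prop l mu mu' (F :|: F').
  apply/andP; split; apply/forallP => x; apply/implyP => hx.
    by apply/forallP => y; apply/implyP => hy; rewrite (hl _ hx) (hl _ hy).
  by move: hx; rewrite inE => /orP [] hx; [exact: free_mem hF hx | exact: free_mem hF' hx].
have e1 := maxsetsup hF hp (subsetUl F F').
have e2 := maxsetsup hF' hp (subsetUr F F').
by rewrite -e1 e2.
Qed.

End Free.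

Lemma star_pm n (l mu mu' : weight n) i : spin_weight mu' ->
  mu'star l mu mu' i = 1/2 \/ mu'star l mu mu' i = -(1/2).
Proof.
move=> h; rewrite /mu'star ffunE; case: pickP => [F _|_]; last exact: spinE.
by case: ifP; auto.
Qed.

Unset Implicit Arguments.
Theorem proposition6p4 (n : nat) (hn : (2 <= n)%N) (l mu mu' : weight n) :
  admissible l mu mu' ->
  forall j k : 'I_n, nat_of_ord k = j.+1 ->
    0 <= l j - l k + mu'star l mu mu' j - mu'star l mu mu' k.
Proof.
move=> [[kk hD] hmu hmu' hd1 hd2] j k hjk.
have dl := Delta_dom hD.
have hle : (j <= k)%N by rewrite hjk.
have dge : l k <= l j := @dom_le _ l j k dl hle.
have [d0|d1] : l j - l k = 0 \/ 1 <= l j - l k.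
  case/intrP: (@dom_int _ l j k dl) => m hm.
  have : 0 <= l j - l k by rewrite subr_ge0.
  rewrite hm ler0z => hm0.
  have [->|hm1] : m = 0 \/ (1 <= m)%R by lia.
    by left.
  by right; rewrite ler1z.
- have ljk : l j = l k by apply/eqP; rewrite -subr_eq0 d0.
  have h1 := @dom_le _ _ j k hd1 hle; have h2 := @dom_le _ _ j k hd2 hle.
  rewrite !ffunE ljk in h1 h2.
  have {}h1 : mu k <= mu j by rewrite -(lerD2l (l k)).
  have {}h2 : mu k + mu' k <= mu j + mu' j by rewrite -(lerD2l (l k)) !addrA.
  rewrite /mu'star !ffunE.
  case: pickP => [F /andP [hF jF]|hN]; case: pickP => [F' /andP [hF' kF']|hN'].
  + have eF := free_same _ _ _ hF hF' jF kF' ljk; subst F'.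
    case: ifP => hj; case: ifP => hk; try lra.
    exfalso; move: hj; rewrite (leq_ltn_trans _ hk) //.
    apply: subset_leq_card; apply/subsetP => x; rewrite !inE => /andP [-> /=].
    move=> hx; apply: (ltn_trans hx); rewrite hjk //.
  + have p1 := free_mem _ _ _ hF jF.
    have p2 := none_nonneg _ _ _ _ (fun F => negbT (hN' F)).
    case: (spinE mu j hmu) => e1; case: (spinE mu k hmu) => e2;
    case: (spinE mu' j hmu') => e3; case: (spinE mu' k hmu') => e4;
    rewrite ?e1 ?e2 ?e3 ?e4 in p1 p2 h1 h2 *; case: ifP => _; lra.
  + have p1 := free_mem _ _ _ hF' kF'.
    have p2 := none_nonneg _ _ _ _ (fun F => negbT (hN F)).
    case: (spinE mu j hmu) => e1; case: (spinE mu k hmu) => e2;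
    case: (spinE mu' j hmu') => e3; case: (spinE mu' k hmu') => e4;
    rewrite ?e1 ?e2 ?e3 ?e4 in p1 p2 h1 h2 *; case: ifP => _; lra.
  + have p1 := none_nonneg _ _ _ _ (fun F => negbT (hN F)).
    have p2 := none_nonneg _ _ _ _ (fun F => negbT (hN' F)).
    case: (spinE mu j hmu) => e1; case: (spinE mu k hmu) => e2;
    case: (spinE mu' j hmu') => e3; case: (spinE mu' k hmu') => e4;
    rewrite ?e1 ?e2 ?e3 ?e4 in p1 p2 h1 h2 *; lra.
- case: (@star_pm _ l mu mu' j hmu') => ->; case: (@star_pm _ l mu mu' k hmu') => ->; lra.
Qed.
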